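(* In the Bayesian online learning setting for $n$-round dynamic inference described in the context, for any online-learned estimation strategy and any round $i$, the parameter $W$ is conditionally independent of the current observation $X_i$ and the estimates $\hat Y^i$ up to round $i$, given the past observations $Z^{i-1}=((X_1,Y_1),\ldots,(X_{i-1},Y_{i-1}))$.
   Context: Setting (Bayesian online learning for $n$-round dynamic inference). $\mathsf X,\mathsf Y,\hat{\mathsf Y},\mathsf W$ are measurable spaces. The following are given: a distribution $P_{X_1}$ on $\mathsf X$; probability transition kernels $K_i(\cdot\mid x,\hat y)$ from $\mathsf X\times\hat{\mathsf Y}$ to $\mathsf X$ for $i=2,\ldots,n$; a parametrized family of kernels $\{P_{Y|X,w}:w\in\mathsf W\}$ from $\mathsf X$ to $\mathsf Y$; and a prior $P_W$ on $\mathsf W$. Write $Z_i=(X_i,Y_i)$. An online-learned estimation strategy is a tuple $(\psi_1,\ldots,\psi_n)$ of maps $\psi_i:(\mathsf X\times\mathsf Y)^{i-1}\times\hat{\mathsf Y}^{i-1}\times\mathsf X\to\hat{\mathsf Y}$. It determines the joint law of $(W,X^n,Y^n,\hat Y^n)$ as follows. $W\sim P_W$. $X_1\sim P_{X_1}$ is independent of $W$. For each $i$: given all previously generated variables, $Y_i\sim P_{Y|X,W}(\cdot\mid X_i,W)$; $\hat Y_i=\psi_i(Z^{i-1},\hat Y^{i-1},X_i)$; and, given all variables generated up to round $i$, $X_{i+1}\sim K_{i+1}(\cdot\mid X_i,\hat Y_i)$. *)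

(* Defs.v *)
From HB Require Import structures.
From mathcomp Require Import all_boot all_order all_algebra.
From mathcomp Require Import all_classical all_reals all_analysis.
Set Implicit Arguments. Unset Strict Implicit. Unset Printing Implicit Defensive.
Import Order.TTheory GRing.Theory Num.Theory.
Local Open Scope classical_set_scope.
Local Open Scope ring_scope.
Local Open Scope ereal_scope.

(* Rounds are indexed from 0: the Rocq round k (0 <= k < n) is the paper's
   round i = k+1.  Thus X k, Y k, Yh k stand for X_{k+1}, Y_{k+1}, \hat Y_{k+1},
   psi k stands for psi_{k+1}, and K k stands for K_{k+1} (used for k >= 1). *)

Definition Zpast {Om TX TY : Type} (X : nat -> Om -> TX) (Y : nat -> Om -> TY)
  (k : nat) (w : Om) : k.-tuple (TX * TY) :=
  [tuple (X (val j) w, Y (val j) w) | j < k].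

Definition past {Om T : Type} (V : nat -> Om -> T) (k : nat) (w : Om)
  : k.-tuple T := [tuple V (val j) w | j < k].

Definition in_sigma {d} {Om : Type} {TV : measurableType d} (V : Om -> TV)
  (G : set Om) : Prop :=
  exists2 B : set TV, measurable B & G = V @^-1` B.

(* Conditional independence of W and U given V (standard definition):
   for every measurable A, the conditional probability P(W in A | U, V)
   admits a version that is a (measurable) function of V alone, i.e.
   P(W in A | U, V) = P(W in A | V) a.s. *)
Definition cond_indep {R : realType} {dO dW dU dV}
  {Om : measurableType dO} {TW : measurableType dW}
  {TU : measurableType dU} {TV : measurableType dV}
  (P : probability Om R) (W : Om -> TW) (U : Om -> TU) (V : Om -> TV) : Prop :=
  forall A : set TW, measurable A ->
  exists g : TV -> R,
    [/\ measurable_fun setT g,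
        (forall v, (0 <= g v <= 1)%R) &
        forall (B : set TU) (C : set TV), measurable B -> measurable C ->
          P (W @^-1` A `&` U @^-1` B `&` V @^-1` C) =
          \int[P]_(w in U @^-1` B `&` V @^-1` C) (g (V w))%:E].

(* (P, W, X, Y, Yh) realizes the joint law of (W, X^n, Y^n, \hat Y^n)
   determined by the online-learned estimation strategy psi. *)
Definition generated_by {R : realType} {dO dX dY dYh dW}
  {Om : measurableType dO} {TX : measurableType dX} {TY : measurableType dY}
  {TYh : measurableType dYh} {TW : measurableType dW}
  (n : nat) (PX1 : probability TX R) (K : nat -> R.-pker (TX * TYh)%type ~> TX)
  (PY : R.-pker (TX * TW)%type ~> TY) (PW : probability TW R)
  (psi : forall k : nat, (k.-tuple (TX * TY) * k.-tuple TYh * TX)%type -> TYh)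
  (P : probability Om R) (W : Om -> TW) (X : nat -> Om -> TX)
  (Y : nat -> Om -> TY) (Yh : nat -> Om -> TYh) : Prop :=
      measurable_fun setT W /\
      (forall k, (k < n)%N -> measurable_fun setT (X k)) /\
      (forall k, (k < n)%N -> measurable_fun setT (Y k)) /\
      (forall A B, measurable A -> measurable B ->
         P (W @^-1` A `&` X 0%N @^-1` B) = PW A * PX1 B) /\
      (* Y_i ~ P_{Y|X,W}(. | X_i, W) given all previously generated variables
         (W, X^i, Y^{i-1}, \hat Y^{i-1}) *)
      (forall k, (k < n)%N -> forall G A,
         in_sigma (fun w => (W w, past X k.+1 w, past Y k w, past Yh k w)) G ->
         measurable A ->
         P (G `&` Y k @^-1` A) = \int[P]_(w in G) PY (X k w, W w) A) /\
      (forall k, (k < n)%N -> forall w,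
         Yh k w = psi k (Zpast X Y k w, past Yh k w, X k w)) /\
      (* X_{i+1} ~ K_{i+1}(. | X_i, \hat Y_i) given all variables up to round i *)
      (forall k, (k.+1 < n)%N -> forall G A,
         in_sigma (fun w => (W w, past X k.+1 w, past Y k.+1 w, past Yh k.+1 w)) G ->
         measurable A ->
         P (G `&` X k.+1 @^-1` A) = \int[P]_(w in G) K k.+1 (X k w, Yh k w) A).

(* Main.v *)
Require Import Defs.
From HB Require Import structures.
From mathcomp Require Import all_boot all_order all_algebra.
From mathcomp Require Import all_classical all_reals all_analysis.
From mathcomp Require Import measurable_realfun.
Set Implicit Arguments. Unset Strict Implicit. Unset Printing Implicit Defensive.
Import Order.TTheory GRing.Theory Num.Theory.
Local Open Scope classical_set_scope.
Local Open Scope ring_scope.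

Section pmr.
Local Open Scope ereal_scope.
Context d d' (Om : measurableType d) (T : measurableType d') (R : realType).
Definition pmr (P : set Om -> \bar R) (S : set Om) (mS : measurable S)
  (F : Om -> T) (mF : measurable_fun setT F) : set T -> \bar R :=
  fun C => P (S `&` F @^-1` C).
Variables (P : {measure set Om -> \bar R}) (S : set Om) (mS : measurable S)
  (F : Om -> T) (mF : measurable_fun setT F).
Let mpre C : measurable C -> measurable (S `&` F @^-1` C).
Proof. by move=> mC; apply: measurableI => //; rewrite -[X in measurable X]setTI; exact: mF. Qed.
Let pmr0 : pmr P mS mF set0 = 0.
Proof. by rewrite /pmr preimage_set0 setI0 measure0. Qed.
Let pmr_ge0 C : 0 <= pmr P mS mF C.
Proof. by rewrite /pmr measure_ge0. Qed.
Let pmr_sa : semi_sigma_additive (pmr P mS mF).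
Proof.
move=> G mG tG mUG; rewrite /pmr preimage_bigcup setI_bigcupr.
apply: measure_semi_sigma_additive.
- by move=> i; exact: mpre.
- apply/trivIsetP => i j _ _ ij.
  move/trivIsetP : tG => /(_ i j Logic.I Logic.I ij) H.
  by rewrite setIACA (_ : F @^-1` G i `&` F @^-1` G j = set0) ?setI0// -preimage_setI H preimage_set0.
- by rewrite -setI_bigcupr -preimage_bigcup; exact: mpre.
Qed.
HB.instance Definition _ := isMeasure.Build _ _ _ (pmr P mS mF) pmr0 pmr_ge0 pmr_sa.
End pmr.

Section pmr_fin.
Local Open Scope ereal_scope.
Context d d' (Om : measurableType d) (T : measurableType d') (R : realType).
Variables (P : {finite_measure set Om -> \bar R}) (S : set Om) (mS : measurable S)
  (F : Om -> T) (mF : measurable_fun setT F).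
Let pmr_fin : fin_num_fun (pmr P mS mF).
Proof.
move=> C mC; rewrite /pmr ge0_fin_numE ?measure_ge0//.
apply: (le_lt_trans (le_measure P _ _ (subsetT _))); rewrite ?inE//.
- by apply: measurableI => //; rewrite -[X in measurable X]setTI; exact: mF.
- by rewrite -ge0_fin_numE ?measure_ge0// fin_num_measure.
Qed.
HB.instance Definition _ := Measure_isFinite.Build _ _ _ (pmr P mS mF) pmr_fin.
End pmr_fin.

Section pmi.
Local Open Scope ereal_scope.
Context d d' (Om : measurableType d) (T : measurableType d') (R : realType).
Definition pmi (P : set Om -> \bar R) (h : Om -> \bar R)
  (mh : measurable_fun setT h) (h0 : forall x, 0 <= h x)
  (F : Om -> T) (mF : measurable_fun setT F) : set T -> \bar R :=
  fun C => \int[P]_(w in F @^-1` C) h w.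
Variables (P : {measure set Om -> \bar R}) (h : Om -> \bar R)
  (mh : measurable_fun setT h) (h0 : forall x, 0 <= h x)
  (F : Om -> T) (mF : measurable_fun setT F).
Let mpre C : measurable C -> measurable (F @^-1` C).
Proof. by move=> mC; rewrite -[X in measurable X]setTI; exact: mF. Qed.
Let pmi0 : pmi P mh h0 mF set0 = 0.
Proof. by rewrite /pmi preimage_set0 integral_set0. Qed.
Let pmi_ge0 C : 0 <= pmi P mh h0 mF C.
Proof. by rewrite /pmi integral_ge0. Qed.
Let pmi_sa : semi_sigma_additive (pmi P mh h0 mF).
Proof.
move=> G mG tG mUG; rewrite /pmi preimage_bigcup.
rewrite ge0_integral_bigcup//.
- apply: is_cvg_ereal_nneg_natsum_cond => m _ _.
  exact: integral_ge0.
- by move=> i; exact: mpre.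
- exact: measurable_funTS.
- apply/trivIsetP => i j _ _ ij.
  move/trivIsetP : tG => /(_ i j Logic.I Logic.I ij) H.
  by rewrite -preimage_setI H preimage_set0.
Qed.
HB.instance Definition _ := isMeasure.Build _ _ _ (pmi P mh h0 mF) pmi0 pmi_ge0 pmi_sa.
End pmi.
Section dens.
Import HBNNSimple.
Local Open Scope ereal_scope.
Context d d' (Om : measurableType d) (T : measurableType d') (R : realType).
Variables (P : {measure set Om -> \bar R}) (V : Om -> T)
  (mV : measurable_fun setT V) (S : set Om) (mS : measurable S)
  (psi : T -> R) (mpsi : measurable_fun setT psi)
  (psi0 : forall v, (0 <= psi v)%R)
  (H : forall C, measurable C ->
     P (S `&` V @^-1` C) = \int[P]_(w in V @^-1` C) (psi (V w))%:E).

Let mVp B : measurable B -> measurable (V @^-1` B).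
Proof. by move=> mB; rewrite -[X in measurable X]setTI; exact: mV. Qed.

Variables (C : set T) (mC : measurable C).

Let mD : measurable (S `&` V @^-1` C).
Proof. by apply: measurableI => //; exact: mVp. Qed.

Let Hind B : measurable B ->
  \int[P]_(w in S `&` V @^-1` C) (\1_B (V w))%:E =
  \int[P]_(w in V @^-1` C) ((\1_B (V w))%:E * (psi (V w))%:E).
Proof.
move=> mB.
rewrite (_ : (fun w => (\1_B (V w))%:E) = (fun w => (\1_(V @^-1` B) w)%:E)); last first.
  by apply/funext => w; rewrite !indicE.
rewrite integral_indic//; last exact: mVp.
rewrite (_ : V @^-1` B `&` (S `&` V @^-1` C) = S `&` V @^-1` (C `&` B)); last first.
  by rewrite preimage_setI setIC setIA.
rewrite H; last exact: measurableI.
rewrite preimage_setI integral_mkcondr epatch_indic.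
apply: eq_integral => w _ /=.
by rewrite muleC !indicE.
Qed.

Let Hsimple (h : {nnsfun T >-> R}) :
  \int[P]_(w in S `&` V @^-1` C) (h (V w))%:E =
  \int[P]_(w in V @^-1` C) ((h (V w))%:E * (psi (V w))%:E).
Proof.
have mind y : measurable_fun setT (fun w => (y * \1_(h @^-1` [set y]) (V w))%:E).
  apply/measurable_EFinP; apply: measurable_funM => //.
  apply: measurableT_comp => //; exact: measurable_indic.
have ry y : y \in range h -> (0 <= y)%R.
  by rewrite inE => -[x _ <-]; exact: fun_ge0.
transitivity (\int[P]_(w in S `&` V @^-1` C)
    (\sum_(y \in range h) (y * \1_(h @^-1` [set y]) (V w))%:E)).
  by apply: eq_integral => w _; rewrite fimfunE -fsumEFin.
rewrite (_ : \int[P]_(w in V @^-1` C) ((h (V w))%:E * (psi (V w))%:E) =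
  \int[P]_(w in V @^-1` C)
    (\sum_(y \in range h) (y * \1_(h @^-1` [set y]) (V w))%:E * (psi (V w))%:E)); last first.
  apply: eq_integral => w _; rewrite fimfunE -fsumEFin// ge0_mule_fsuml//.
  by move=> y; exact: nnfun_muleindic_ge0.
rewrite ge0_integral_fsum//; last 2 first.
  - by move=> y; exact: measurable_funTS.
  - by move=> y w _; exact: nnfun_muleindic_ge0.
rewrite ge0_integral_fsum//; last 3 first.
  - exact: mVp.
  - move=> y; apply: measurable_funTS; apply: emeasurable_funM => //.
    by apply/measurable_EFinP; exact: measurableT_comp.
  - by move=> y w _; rewrite mule_ge0// ?lee_fin//; exact: nnfun_muleindic_ge0.
apply: eq_fsbigr => y yr.
under eq_integral do rewrite EFinM.
under [RHS]eq_integral do rewrite EFinM -muleA.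
rewrite ge0_integralZl//; last 2 first.
  - by apply/measurable_funTS/measurable_EFinP; apply: measurableT_comp.
  - by rewrite lee_fin ry.
rewrite ge0_integralZl//; last 4 first.
  - exact: mVp.
  - apply: measurable_funTS; apply: emeasurable_funM; apply/measurable_EFinP.
      by apply: measurableT_comp.
    exact: measurableT_comp.
  - by move=> w _; rewrite mule_ge0// lee_fin ?indicE.
  - by rewrite lee_fin ry.
by rewrite Hind.
Qed.

Lemma dens_lemma (f : T -> R) (mf : measurable_fun setT f)
  (f0 : forall v, (0 <= f v)%R) :
  \int[P]_(w in S `&` V @^-1` C) (f (V w))%:E =
  \int[P]_(w in V @^-1` C) (f (V w) * psi (V w))%:E.
Proof.
have mfe : measurable_fun setT (fun v => (f v)%:E) by exact/measurable_EFinP.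
pose h := nnsfun_approx measurableT mfe.
have hf v : (fun n => (h n v)%:E) @ \oo --> (f v)%:E.
  have f0e : forall v, [set: T] v -> 0 <= (fun v => (f v)%:E) v.
    by move=> ? _; rewrite /= lee_fin.
  exact: (@cvg_nnsfun_approx _ _ _ _ measurableT _ mfe f0e v I).
have ndh v : nondecreasing_seq (fun n => (h n v)).
  by move=> m n mn; exact/lefP/nd_nnsfun_approx.
transitivity (limn (fun n => \int[P]_(w in S `&` V @^-1` C) (h n (V w))%:E)).
  rewrite -monotone_convergence//.
  - apply: eq_integral => w _; apply/esym/cvg_lim => //; exact: hf.
  - move=> n; apply/measurable_funTS/measurable_EFinP.
    by apply: measurableT_comp => //; exact: measurable_funP.
  - by move=> n w _; rewrite lee_fin.
  - by move=> w _ m n mn; rewrite lee_fin; exact: ndh.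
transitivity (limn (fun n =>
   \int[P]_(w in V @^-1` C) ((h n (V w))%:E * (psi (V w))%:E))).
  by under eq_fun do rewrite Hsimple.
rewrite -monotone_convergence//.
- apply: eq_integral => w _; apply/cvg_lim => //.
  rewrite EFinM; apply: cvgeZr => //; exact: hf.
- exact: mVp.
- move=> n; apply/measurable_funTS; apply: emeasurable_funM.
    apply/measurable_EFinP; apply: measurableT_comp => //; exact: measurable_funP.
  by apply/measurable_EFinP; exact: measurableT_comp.
- by move=> n w _; rewrite mule_ge0// lee_fin.
- by move=> w _ m n mn; rewrite lee_wpmul2r ?lee_fin//; exact: ndh.
Qed.
End dens.

Section rn.
Local Open Scope ereal_scope.
Context d d' (Om : measurableType d) (T : measurableType d') (R : realType).
Variables (P : probability Om R) (V : Om -> T)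
  (mV : measurable_fun setT V) (S : set Om) (mS : measurable S).

Let mVp B : measurable B -> measurable (V @^-1` B).
Proof. by move=> mB; rewrite -[X in measurable X]setTI; exact: mV. Qed.

Lemma rn_step : exists g : T -> R,
  [/\ measurable_fun setT g, (forall v, (0 <= g v <= 1)%R) &
      forall C, measurable C ->
        P (S `&` V @^-1` C) = \int[P]_(w in V @^-1` C) (g (V w))%:E].
Proof.
pose mu := pmr P (@measurableT _ Om) mV.
pose nu := pmr P mS mV.
have numu : nu `<< mu.
  apply/null_content_dominatesP => A mA /=; rewrite /pmr setTI => mu0.
  apply/eqP; rewrite eq_le measure_ge0 andbT -mu0.
  apply: le_measure; rewrite ?inE//; last exact: mVp.
  by apply: measurableI => //; exact: mVp.
have [f [f0 intf fE]] := radon_nikodym_finite numu.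
have mf : measurable_fun setT f := measurable_int _ intf.
pose g v := fine (mine (f v) 1).
have g01 v : (0 <= g v <= 1)%R.
  rewrite /g; case: (f v) (f0 v) => [r|_|//]; last by rewrite /= ler01 lexx.
  rewrite lee_fin => r0; rewrite -EFin_min /= le_min r0 ler01 /=.
  by rewrite ge_min lexx orbT.
have mg : measurable_fun setT g.
  apply: measurableT_comp => //; apply: measurable_mine => //.
exists g; split => // C mC.
have mN : measurable [set x | 1 < f x].
  rewrite -[X in measurable X]setTI; apply: measurable_lte => //.
have mg' : measurable_fun setT (fun x => (g x)%:E) by exact/measurable_EFinP.
transitivity (\int[mu]_(x in C) f x); first exact: (fE C mC).
rewrite (_ : \int[P]_(w in V @^-1` C) (g (V w))%:E =
             \int[mu]_(x in C) (g x)%:E); last first.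
  rewrite (@eq_measure_integral _ _ _ C (pushforward P V)); last first.
    by move=> A mA _ /=; rewrite /pmr setTI.
  rewrite ge0_integral_pushforward//.
    exact: measurable_funTS.
  by move=> y _; rewrite lee_fin; case/andP: (g01 y).
have CN : C = (C `&` [set x | 1 < f x]) `|` (C `&` ~` [set x | 1 < f x]).
  by rewrite -setIUr setUv setIT.
have dCN : [disjoint C `&` [set x | 1 < f x] & C `&` ~` [set x | 1 < f x]].
  by rewrite /disj_set setIACA setICr setI0.
have mCN1 : measurable (C `&` [set x | 1 < f x]) by exact: measurableI.
have mCN2 : measurable (C `&` ~` [set x | 1 < f x]).
  by apply: measurableI => //; exact: measurableC.
rewrite CN !ge0_integral_setU//; last 3 first.
  - exact: measurable_funTS.
  - by move=> x _; rewrite lee_fin; case/andP: (g01 x).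
  - exact: measurable_funTS.
congr (_ + _).
  have e1 : \int[mu]_(x in C `&` [set x | 1 < f x]) (g x)%:E = mu (C `&` [set x | 1 < f x]).
    transitivity (\int[mu]_(x in C `&` [set x | 1 < f x]) (cst 1 x)).
      apply: eq_integral => x /[!inE] -[_ /= fx1]; rewrite /g /=.
      by move: fx1; case: (f x) => [r| |]//=; rewrite lte_fin => r1; rewrite -EFin_min /= min_r// ltW.
    by rewrite integral_cst// mul1e.
  rewrite e1; apply/eqP; rewrite eq_le; apply/andP; split.
    rewrite -fE// /nu /mu /pmr setTI; apply: le_measure; rewrite ?inE.
    - by apply: measurableI => //; exact: mVp.
    - exact: mVp.
    - exact: subIsetr.
  rewrite -[X in X <= _]e1; apply: ge0_le_integral => //.
  - by move=> x _; rewrite lee_fin; case/andP: (g01 x).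
  - exact: measurable_funTS.
  - exact: measurable_funTS.
  - move=> x [_ /= fx1]; rewrite /g; move: fx1.
    by case: (f x) => [r| |]//=; rewrite lte_fin => r1; rewrite -EFin_min /= min_r ?lee_fin// ltW.
apply: eq_integral => x /[!inE] -[_ /= fx1]; rewrite /g.
move: fx1 (f0 x); case: (f x) => [r| |]//= /negP; rewrite -leNgt => r1 _.
  by rewrite -EFin_min /= min_l //; rewrite -lee_fin.
by move: r1; rewrite leNgt ltry.
Qed.
End rn.

Unset Implicit Arguments.

Fixpoint hs {TX TY TYh : Type} (dz : TX * TY) (dh : TYh)
  (psi : forall k : nat, (k.-tuple (TX * TY) * k.-tuple TYh * TX)%type -> TYh)
  (j : nat) (v : seq (TX * TY)) : seq TYh :=
  match j with
  | 0 => [::]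
  | j'.+1 => let s := hs dz dh psi j' v in
      rcons s (psi j' ([tuple nth dz v (val i) | i < j'],
                       [tuple nth dh s (val i) | i < j'], (nth dz v j').1))
  end.

Lemma size_hs {TX TY TYh : Type} dz dh psi j v :
  size (@hs TX TY TYh dz dh psi j v) = j.
Proof. by elim: j => //= j IH; rewrite size_rcons IH. Qed.

Section hs_meas.
Context dX dY dYh d0 (TX : measurableType dX) (TY : measurableType dY)
  (TYh : measurableType dYh) (T0 : measurableType d0).
Variables (dz : TX * TY) (dh : TYh)
  (psi : forall k : nat, (k.-tuple (TX * TY) * k.-tuple TYh * TX)%type -> TYh)
  (psi_meas : forall k : nat, measurable_fun setT (psi k)).
Variables (F : T0 -> seq (TX * TY))
  (mF : forall i, measurable_fun setT (fun t => nth dz (F t) i)).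

Lemma measurable_hs j i :
  measurable_fun setT (fun t => nth dh (hs dz dh psi j (F t)) i).
Proof.
elim: j i => [|j IH] i /=; first by rewrite nth_nil; exact: measurable_cst.
have -> : (fun t => nth dh (rcons (hs dz dh psi j (F t))
      (psi j ([tuple nth dz (F t) (val i0) | i0 < j],
              [tuple nth dh (hs dz dh psi j (F t)) (val i0) | i0 < j],
              (nth dz (F t) j).1))) i) =
    (fun t => if (i < j)%N then nth dh (hs dz dh psi j (F t)) i
              else if i == j then psi j ([tuple nth dz (F t) (val i0) | i0 < j],
              [tuple nth dh (hs dz dh psi j (F t)) (val i0) | i0 < j],
              (nth dz (F t) j).1) else dh).
  by apply/funext => t; rewrite nth_rcons size_hs.
case: (i < j)%N; first exact: IH.
case: (i == j); last exact: measurable_cst.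
apply: measurableT_comp; first exact: psi_meas.
apply: measurable_fun_pair; first apply: measurable_fun_pair.
- apply/measurable_fun_tnthP => i0.
  rewrite (_ : _ \o _ = fun t => nth dz (F t) i0); first exact: mF.
  by apply/funext => t /=; rewrite tnth_mktuple.
- apply/measurable_fun_tnthP => i0.
  rewrite (_ : _ \o _ = fun t => nth dh (hs dz dh psi j (F t)) i0); first exact: IH.
  by apply/funext => t /=; rewrite tnth_mktuple.
- by apply: measurableT_comp => //; exact: mF.
Qed.
End hs_meas.

Lemma hs_spec {Om TX TY TYh : Type} (n : nat) (dz : TX * TY) (dh : TYh)
  (psi : forall k : nat, (k.-tuple (TX * TY) * k.-tuple TYh * TX)%type -> TYh)
  (X : nat -> Om -> TX) (Y : nat -> Om -> TY) (Yh : nat -> Om -> TYh)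
  (hYh : forall k, (k < n)%N -> forall w,
         Yh k w = psi k (Zpast X Y k w, past Yh k w, X k w))
  w j (v : seq (TX * TY)) : (j <= n)%N ->
  (forall i, (i.+1 < j)%N -> nth dz v i = (X i w, Y i w)) ->
  (forall i, (i < j)%N -> (nth dz v i).1 = X i w) ->
  hs dz dh psi j v = [seq Yh i w | i <- iota 0 j].
Proof.
elim: j => [//|j IH] jn h1 h2.
have IH' := IH (ltnW jn) (fun i hi => h1 i (ltn_trans hi (ltnSn _)))
  (fun i hi => h2 i (ltn_trans hi (ltnSn _))).
have -> : iota 0 j.+1 = rcons (iota 0 j) j by rewrite -addn1 iotaD cats1.
rewrite map_rcons /= IH'; congr rcons.
rewrite hYh//; congr (psi j (_, _, _)).
- by apply: eq_mktuple => i; rewrite h1 // ltnS ltn_ord.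
- by apply: eq_mktuple => i; rewrite (nth_map 0) ?size_iota// nth_iota.
- by rewrite h2.
Qed.

Theorem lemma6 (R : realType) (dO dX dY dYh dW : measure_display)
  (Om : measurableType dO) (TX : measurableType dX) (TY : measurableType dY)
  (TYh : measurableType dYh) (TW : measurableType dW)
  (n : nat) (PX1 : probability TX R) (K : nat -> R.-pker (TX * TYh)%type ~> TX)
  (PY : R.-pker (TX * TW)%type ~> TY) (PW : probability TW R)
  (psi : forall k : nat, (k.-tuple (TX * TY) * k.-tuple TYh * TX)%type -> TYh)
  (psi_meas : forall k : nat, measurable_fun setT (psi k))
  (P : probability Om R) (W : Om -> TW) (X : nat -> Om -> TX)
  (Y : nat -> Om -> TY) (Yh : nat -> Om -> TYh)
  (HP : generated_by n PX1 K PY PW psi P W X Y Yh)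
  (k : nat) (hk : (k < n)%N) :
  cond_indep P W (fun w => (X k w, past Yh k.+1 w)) (Zpast X Y k).
Proof.
case: HP => mW [mX [mY [hind0 [hY [hYh hK]]]]].
move=> A mA.
have mXk : measurable_fun setT (X k) := mX k hk.
have mV : measurable_fun setT (Zpast X Y k).
  apply/measurable_fun_tnthP => i.
  rewrite (_ : _ \o _ = fun w => (X i w, Y i w)); last first.
    by apply/funext => w /=; rewrite tnth_mktuple.
  by apply: measurable_fun_pair; [apply: mX | apply: mY];
    exact: ltn_trans (ltn_ord i) hk.
have mpre d' (T'' : measurableType d') (f : Om -> T'') (B : set T'') :
    measurable_fun setT f -> measurable B -> measurable (f @^-1` B).
  by move=> mf mB; rewrite -[X in measurable X]setTI; exact: mf.
have mWA : measurable (W @^-1` A) by exact: mpre mW mA.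
have [g [mg g01 gE]] := rn_step P mV mWA.
have g0 v : (0 <= g v)%R by case/andP: (g01 v).
exists g; split => // B C mB mC.
have [w0 _] : [set: Om] !=set0.
  apply/set0P/negP => /eqP h0; have := probability_setT P.
  by rewrite h0 measure0 => /esym/eqP; rewrite onee_eq0.
pose dz := (X 0%N w0, Y 0%N w0); pose dh := Yh 0%N w0.
have Hnth w i : (i < k)%N -> nth dz (Zpast X Y k w) i = (X i w, Y i w).
  by move=> ik; rewrite -[i]/(nat_of_ord (Ordinal ik)) -tnth_nth tnth_mktuple.
have mnthV i : measurable_fun setT (fun v : k.-tuple (TX * TY) => nth dz v i).
  case: (ltnP i k) => ik.
    rewrite (_ : (fun v => _) = (fun v => tnth v (Ordinal ik))).
      exact: measurable_tnth.
    by apply/funext => v; rewrite (tnth_nth dz).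
  rewrite (_ : (fun v => _) = (fun _ => dz)); first exact: measurable_cst.
  by apply/funext => v; rewrite nth_default // size_tuple.
pose Gam := fun p : (k.-tuple (TX * TY) * TX)%type =>
  [tuple nth dh (hs dz dh psi k.+1 (rcons p.1 (p.2, dz.2))) (val i) | i < k.+1].
have mGam : measurable_fun setT Gam.
  apply/measurable_fun_tnthP => i.
  rewrite (_ : _ \o _ = fun p : (k.-tuple (TX * TY) * TX)%type => nth dh (hs dz dh psi k.+1 (rcons p.1 (p.2, dz.2))) i); last first.
    by apply/funext => p /=; rewrite tnth_mktuple.
  apply: (measurable_hs _ _ _ _ _ _ _ _ dz dh psi psi_meas
     (fun p : (k.-tuple (TX * TY) * TX)%type => rcons p.1 (p.2, dz.2)) _ k.+1 i).
  move=> j.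
  rewrite (_ : (fun p => _) = (fun p : (k.-tuple (TX * TY) * TX)%type =>
     if (j < k)%N then nth dz p.1 j else if j == k then (p.2, dz.2) else dz)); last first.
    by apply/funext => p; rewrite nth_rcons size_tuple.
  case: (j < k)%N; first exact: measurableT_comp (mnthV j) measurable_fst.
  case: (j == k); last exact: measurable_cst.
  by apply: measurable_fun_pair => //; exact: measurable_cst.
have HU w : past Yh k.+1 w = Gam (Zpast X Y k w, X k w).
  rewrite /Gam (hs_spec n dz dh psi X Y Yh hYh w k.+1) //.
  - by apply: eq_mktuple => i; rewrite (nth_map 0%N) ?size_iota ?ltn_ord // nth_iota ?ltn_ord.
  - move=> i ik; rewrite nth_rcons size_tuple.
    by rewrite ltnS in ik; rewrite ik Hnth.
  - move=> i ik; rewrite nth_rcons size_tuple.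
    case: ltnP => ik'; first by rewrite Hnth.
    have -> : i = k by apply/eqP; rewrite eqn_leq -ltnS ik /=.
    by rewrite eqxx.
have Hphi : forall D1, measurable D1 -> exists phi : k.-tuple (TX * TY) -> R,
  [/\ measurable_fun setT phi, (forall v, (0 <= phi v)%R) &
    forall S', measurable S' -> forall C0, measurable C0 ->
      (P (W @^-1` S' `&` Zpast X Y k @^-1` C0 `&` X k @^-1` D1) =
      \int[P]_(w in W @^-1` S' `&` Zpast X Y k @^-1` C0) (phi (Zpast X Y k w))%:E)%E].
  move=> D1 mD1.
  have [k0|kpos] := eqVneq k 0%N.
    exists (fun _ => fine (PX1 D1)); split.
    - exact: measurable_cst.
    - by move=> v; rewrite fine_ge0 // measure_ge0.
    move=> S' mS' C0 mC0.
    have Vc w : Zpast X Y k w = Zpast X Y k w0.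
      case: (Zpast X Y k w) => s hs; case: (Zpast X Y k w0) => s' hs'.
      apply: val_inj => /=; move: hs hs'; rewrite k0.
      by move=> /eqP/size0nil -> /eqP/size0nil ->.
    have PS' : P (W @^-1` S') = PW S'.
      have := hind0 S' setT mS' measurableT.
      by rewrite preimage_setT setIT probability_setT mule1.
    have fin1 : PX1 D1 \is a fin_num by rewrite fin_num_measure.
    case: (pselect (C0 (Zpast X Y k w0))) => hC.
      have -> : Zpast X Y k @^-1` C0 = setT.
        by apply/seteqP; split => // w _; rewrite /= Vc.
      rewrite !setIT integral_cst//; last exact: mpre.
      transitivity (PW S' * PX1 D1)%E; first by rewrite k0; exact: hind0.
      by rewrite fineK // muleC; congr (_ * _)%E; exact/esym/PS'.
    have -> : Zpast X Y k @^-1` C0 = set0.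
      by apply/seteqP; split => // w /=; rewrite Vc.
    by rewrite setI0 set0I measure0 integral_set0.
  have k0 : (0 < k)%N by rewrite lt0n.
  have Kfin x : K k x D1 \is a fin_num.
    have h1 := @prob_kernel _ _ _ _ _ (K k) x.
    rewrite ge0_fin_numE ?measure_ge0 //.
    apply: (@le_lt_trans _ _ 1%E); last exact: ltry.
    rewrite -h1; apply: (@le_measure _ _ _ (K k x)); rewrite ?inE //.
  exists (fun v => fine (K k ((nth dz v k.-1).1, nth dh (hs dz dh psi k v) k.-1) D1)).
  split.
  - apply: measurableT_comp => //.
    apply: (measurableT_comp (measurable_kernel (K k) D1 mD1)).
    apply: measurable_fun_pair.
      exact: measurableT_comp measurable_fst (mnthV k.-1).
    exact: (measurable_hs _ _ _ _ _ _ _ _ dz dh psi psi_meas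
     (fun v : k.-tuple (TX * TY) => (v : seq _)) mnthV k k.-1).
  - by move=> v; rewrite fine_ge0 // measure_ge0.
  move=> S' mS' C0 mC0.
  have hK' := hK k.-1; rewrite prednK // in hK'.
  rewrite hK' //.
  - apply: eq_integral => w _.
    rewrite (hs_spec n dz dh psi X Y Yh hYh w k) ?(ltnW hk) //.
    + rewrite (nth_map 0%N) ?size_iota ?prednK ?leqnn // nth_iota ?prednK ?leqnn //.
      by rewrite Hnth ?prednK ?leqnn // fineK.
    + by move=> i ik; rewrite Hnth // (ltn_trans (ltnSn i)).
    + by move=> i ik; rewrite Hnth.
  - pose Psi := fun q : (TW * k.-tuple TX * k.-tuple TY * k.-tuple TYh)%type =>
      (q.1.1.1, [tuple (tnth q.1.1.2 i, tnth q.1.2 i) | i < k]).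
    exists (Psi @^-1` (S' `*` C0)).
      have mPsi : measurable_fun setT Psi; last first.
        rewrite -[X in measurable X]setTI.
        exact: (mPsi measurableT _ (measurableX mS' mC0)).
      apply: measurable_fun_pair.
        by apply: measurableT_comp => //; apply: measurableT_comp.
      apply/measurable_fun_tnthP => i.
      rewrite (_ : _ \o _ = fun q : (TW * k.-tuple TX * k.-tuple TY * k.-tuple TYh)%type =>
          (tnth q.1.1.2 i, tnth q.1.2 i)); last first.
        by apply/funext => q /=; rewrite tnth_mktuple.
      apply: measurable_fun_pair.
        exact: (measurableT_comp (measurable_tnth i)
          (measurableT_comp measurable_snd (measurableT_comp measurable_fst measurable_fst))).
      exact: (measurableT_comp (measurable_tnth i)
          (measurableT_comp measurable_snd measurable_fst)).
    have ZP w : [tuple (tnth (past X k w) i, tnth (past Y k w) i) | i < k] = Zpast X Y k w.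
      by apply: eq_mktuple => i; rewrite !tnth_mktuple.
    by apply/seteqP; split => w /=; rewrite /Psi /= ZP.
have Hrect C1 D1 : measurable C1 -> measurable D1 ->
  (P (W @^-1` A `&` (Zpast X Y k @^-1` C1 `&` X k @^-1` D1)) =
  \int[P]_(w in Zpast X Y k @^-1` C1 `&` X k @^-1` D1) (g (Zpast X Y k w))%:E)%E.
  move=> mC1 mD1.
  have [phi [mphi phi0 Ephi]] := Hphi D1 mD1.
  have mXD1 : measurable (X k @^-1` D1) by exact: mpre mXk mD1.
  have HX C0 : measurable C0 -> (P (X k @^-1` D1 `&` Zpast X Y k @^-1` C0) =
      \int[P]_(w in Zpast X Y k @^-1` C0) (phi (Zpast X Y k w))%:E)%E.
    move=> mC0; have := Ephi setT measurableT C0 mC0.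
    by rewrite preimage_setT !setTI setIC.
  rewrite setIA Ephi // (dens_lemma mV mWA mg g0 gE mC1 mphi phi0).
  rewrite setIC (dens_lemma mV mXD1 mphi phi0 HX mC1 mg g0).
  by apply: eq_integral => w _; rewrite mulrC.
pose Phi := fun w => (Zpast X Y k w, X k w).
have mPhi : measurable_fun setT Phi := measurable_fun_pair mV mXk.
pose E := [set p : (k.-tuple (TX * TY) * TX)%type | C p.1 /\ B (p.2, Gam p)].
have mE : measurable E.
  have -> : E = (fst @^-1` C) `&` ((fun p => (p.2, Gam p)) @^-1` B) by [].
  apply: measurableI.
  - by rewrite -[X in measurable X]setTI; apply: measurable_fst.
  - rewrite -[X in measurable X]setTI.
    by apply: (measurable_fun_pair measurable_snd mGam).
have HUB : (fun w => (X k w, past Yh k.+1 w)) @^-1` B `&` Zpast X Y k @^-1` C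
    = Phi @^-1` E.
  by apply/seteqP; split => w /=; rewrite HU => -[? ?].
rewrite -setIA HUB.
pose h := fun w => (g (Zpast X Y k w))%:E.
have mh : measurable_fun setT h by exact/measurable_EFinP/measurableT_comp.
have h0 w : (0 <= h w)%E by rewrite /h lee_fin.
pose m1 := pmr P mWA mPhi.
pose m2 := pmi P mh h0 mPhi.
apply: (measure_unique
   [set A1 `*` B1 | A1 in measurable & B1 in measurable] (fun _ => setT)
   _ _ _ _ m1 m2 _ _ E mE).
- exact: measurable_prod_measurableType.
- move=> _ _ [A1 mA1 [B1 mB1 <-]] [A2 mA2 [B2 mB2 <-]].
  exists (A1 `&` A2); first exact: measurableI.
  by exists (B1 `&` B2); [exact: measurableI|rewrite setXI].
- by move=> _; exists setT => //; exists setT => //; rewrite setXTT.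
- by apply/seteqP; split => // x _; exists 0%N.
- by move=> _ [C1 mC1 [D1 mD1 <-]]; exact: Hrect.
- move=> _ /=; rewrite /pmr; apply: (le_lt_trans (probability_le1 _ _)) => //.
    by apply: measurableI => //; exact: mpre.
  exact: ltry.
Qed.
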